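(* Let $r\in\mathbb{N}$ with $r\ge 2$. Let $B$ be the squarefree sequence over $C_2^r$ whose set of terms is $C_2^{r}\setminus \{0\}$ (each non-zero element occurring exactly once). Then $B$ is a zero-sum sequence and $\max \mathsf{L}(B) = \lfloor (2^r - 1)/3 \rfloor$.
   Context: $C_2^r$ is the elementary abelian $2$-group of rank $r$. A sequence is a finite unordered list of group elements with repetitions; squarefree means no repetitions; a minimal zero-sum sequence is a non-empty sequence with sum $0$ having no proper non-empty zero-sum subsequence; for a zero-sum sequence $B$, $\mathsf{L}(B)$ is the set of all $t$ such that $B$ can be written as a product of $t$ minimal zero-sum sequences. *)

(* Defs.v *)
From mathcomp Require Import all_boot all_order all_algebra.
Set Implicit Arguments. Unset Strict Implicit. Unset Printing Implicit Defensive.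
Import GRing.Theory.
Local Open Scope ring_scope.

Definition C2 (r : nat) : finZmodType := 'rV['F_2]_r.

Section Seqs.
Variable G : finZmodType.

(* Sequences over G are finite unordered lists: we use [seq G] up to perm_eq. *)
Definition seq_sum (s : seq G) : G := \sum_(x <- s) x.

Definition zero_sum (s : seq G) : Prop := seq_sum s = 0.

Definition minimal_zero_sum (s : seq G) : Prop :=
  [/\ s <> [::], zero_sum s &
      forall t u : seq G, perm_eq s (t ++ u) -> t <> [::] -> u <> [::] ->
        ~ zero_sum t].

(* The set of lengths L(B): t \in L(B) iff B is (up to reordering) the product
   of t minimal zero-sum sequences. *)
Definition in_lengths (B : seq G) (t : nat) : Prop :=
  exists fs : seq (seq G),
    [/\ size fs = t, forall A, A \in fs -> minimal_zero_sum A
      & perm_eq B (flatten fs)].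

End Seqs.

Definition all_nonzero (r : nat) : seq (C2 r) := [seq x <- enum (C2 r) | x != 0].

(* Main.v *)
Require Import Defs.
From mathcomp Require Import all_boot all_order all_algebra.
From mathcomp Require Import zify.
Import GRing.Theory.

Local Open Scope ring_scope.

Lemma F2c (x : 'F_2) : x = 0 \/ x = 1.
Proof. case: x => [[|[|//]]] i; [left|right]; exact: val_inj. Qed.

Lemma F2_dbl (x : 'F_2) : x + x = 0.
Proof. by case: (F2c x) => ->; apply: val_inj. Qed.

Ltac F2s x := let H := fresh in case: (F2c x) => H; rewrite ?H.

Lemma C2_dbl r (x : C2 r) : x + x = 0.
Proof. by apply/rowP => j; rewrite !mxE F2_dbl. Qed.

Lemma C2_opp r (x : C2 r) : - x = x.
Proof. by apply/eqP; rewrite eq_sym -subr_eq0 opprK C2_dbl. Qed.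

Lemma mem_all_nonzero r (x : C2 r) : (x \in all_nonzero r) = (x != 0).
Proof. by rewrite mem_filter mem_enum andbT. Qed.

Lemma uniq_all_nonzero r : uniq (all_nonzero r).
Proof. by rewrite filter_uniq // enum_uniq. Qed.

Lemma card_C2 r : #|C2 r| = (2 ^ r)%N.
Proof. by rewrite /C2 card_mx card_Fp // mul1n. Qed.

Lemma size_all_nonzero r : size (all_nonzero r) = (2 ^ r - 1)%N.
Proof.
rewrite size_filter -card_C2 cardT.
have := count_predC (pred1 (0 : C2 r)) (enum (C2 r)).
rewrite count_uniq_mem ?enum_uniq // mem_enum /= => <-.
by rewrite add1n subn1.
Qed.

Lemma seq_sum_cons (G : finZmodType) (x : G) s : seq_sum (x :: s) = x + seq_sum s.
Proof. by rewrite /seq_sum big_cons. Qed.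

Lemma seq_sum_nil (G : finZmodType) : seq_sum ([::] : seq G) = 0.
Proof. by rewrite /seq_sum big_nil. Qed.

Lemma seq_sum_cat (G : finZmodType) (s t : seq G) : seq_sum (s ++ t) = seq_sum s + seq_sum t.
Proof. by rewrite /seq_sum big_cat. Qed.

Lemma seq_sum_perm (G : finZmodType) (s t : seq G) : perm_eq s t -> seq_sum s = seq_sum t.
Proof. by move=> p; rewrite /seq_sum (perm_big _ p). Qed.

Lemma zs_size3 r (t : seq (C2 r)) : t != [::] -> uniq t -> (forall x, x \in t -> x != 0) ->
  seq_sum t = 0 -> (3 <= size t)%N.
Proof.
case: t => [//|x [|y [|z t]]] // _ u nz.
- rewrite seq_sum_cons seq_sum_nil addr0 => x0.
  by have := nz x; rewrite inE x0 eqxx => /(_ isT).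
- rewrite !seq_sum_cons seq_sum_nil addr0 => /eqP.
  rewrite addr_eq0 C2_opp => /eqP xy.
  by move: u; rewrite /= inE xy eqxx.
Qed.

Lemma uniq_flatten_mem (T : eqType) (ss : seq (seq T)) A : uniq (flatten ss) -> A \in ss -> uniq A.
Proof.
elim: ss => [//|B ss IH] /=; rewrite cat_uniq inE => /and3P [uB _ uss] /orP [/eqP -> //|].
exact: IH.
Qed.

Lemma size_flatten3 (T : eqType) (ss : seq (seq T)) : (forall A, A \in ss -> 3 <= size A)%N ->
  (3 * size ss <= size (flatten ss))%N.
Proof.
elim: ss => [//|B ss IH] H /=; rewrite size_cat mulnS leq_add //.
  by apply: H; rewrite inE eqxx.
by apply: IH => A HA; apply: H; rewrite inE HA orbT.
Qed.

Lemma minimal_of_blk r (A : seq (C2 r)) : uniq A -> (forall x, x \in A -> x != 0) ->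
  seq_sum A = 0 -> (3 <= size A <= 4)%N -> minimal_zero_sum A.
Proof.
move=> uA nzA sA /andP [s3 s4]; split => //.
  by move=> A0; move: s3; rewrite A0.
move=> t u p t0 u0 zt.
have ut : uniq (t ++ u) by rewrite -(perm_uniq p).
have memt : forall x, x \in t -> x != 0.
  by move=> x xt; apply: nzA; rewrite (perm_mem p) mem_cat xt.
have utt : uniq t by move: ut; rewrite cat_uniq => /andP [].
have := @zs_size3 r t (introN eqP t0) utt memt zt.
move: (perm_size p) s4; rewrite size_cat => -> s4 t3.
case: u u0 p s4 {ut} => [//|w [|w' u]] _ p s4; last first.
  by move: s4 t3 => /=; lia.
have := @seq_sum_perm (C2 r) _ _ p; rewrite sA seq_sum_cat zt seq_sum_cons seq_sum_nil !addr0 add0r => w0.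
by have := nzA w; rewrite (perm_mem p) mem_cat mem_seq1 eqxx orbT w0 eqxx => /(_ isT).
Qed.

Lemma upper r (fs : seq (seq (C2 r))) :
  (forall A, A \in fs -> minimal_zero_sum A) -> perm_eq (all_nonzero r) (flatten fs) ->
  (size fs <= (2 ^ r - 1) %/ 3)%N.
Proof.
move=> Hm p.
have uf : uniq (flatten fs) by rewrite -(perm_uniq p) uniq_all_nonzero.
rewrite leq_divRL // mulnC -size_all_nonzero (perm_size p).
apply: size_flatten3 => A HA.
have [A0 zA _] := Hm A HA.
apply: zs_size3 => //; first exact/eqP.
  exact: uniq_flatten_mem uf HA.
move=> x xA; rewrite -mem_all_nonzero (perm_mem p).
by apply/flattenP; exists A.
Qed.

Definition psi (a : 'rV['F_2]_2) : 'rV['F_2]_2 :=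
  \row_(j < 2) (if j == ord0 then a 0 ord_max else a 0 ord0 + a 0 ord_max).
Definition w0 : 'rV['F_2]_2 := \row_(j < 2) (if j == ord0 then 1 else 0).

Lemma rv2_eq (a b : 'rV['F_2]_2) : a 0 ord0 = b 0 ord0 -> a 0 ord_max = b 0 ord_max -> a = b.
Proof.
move=> h0 h1; apply/rowP => j; case: j => [[|[|//]]] i.
  by have -> : Ordinal i = ord0 by apply: val_inj.
by have -> : Ordinal i = ord_max by apply: val_inj.
Qed.


Lemma psi3 a : psi (psi (psi a)) = a.
Proof.
apply: rv2_eq; rewrite !mxE /=; F2s (a 0 ord0); F2s (a 0 ord_max); by apply: val_inj.
Qed.

Lemma psi_add a : a + psi a = psi (psi a).
Proof.
apply: rv2_eq; rewrite !mxE /=; F2s (a 0 ord0); F2s (a 0 ord_max); by apply: val_inj.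
Qed.

Lemma nz2 a : a != 0 -> a = w0 \/ a = psi w0 \/ a = psi (psi w0).
Proof.
move=> a0.
case: (F2c (a 0 ord0)) => h0; case: (F2c (a 0 ord_max)) => h1.
- by case/eqP: a0; apply: rv2_eq; rewrite ?h0 ?h1 !mxE; try apply: val_inj.
- by right; left; apply: rv2_eq; rewrite ?h0 ?h1 !mxE /=; try apply: val_inj.
- by left; apply: rv2_eq; rewrite ?h0 ?h1 !mxE /=; try apply: val_inj.
- by right; right; apply: rv2_eq; rewrite ?h0 ?h1 !mxE /=; apply: val_inj.
Qed.

Definition blk r (A : seq (C2 r)) : bool := (3 <= size A <= 4)%N && (seq_sum A == 0).

Definition Good r : Prop := exists P : seq (seq (C2 r)),
  [/\ size P = ((2 ^ r - 1) %/ 3)%N, all (@blk r) P, perm_eq (all_nonzero r) (flatten P)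
    & exists phi : C2 r -> C2 r, bijective phi /\ bijective (fun a => a + phi a)].

Definition Lx n (x : C2 n.+2) : 'rV['F_2]_2 := @lsubmx _ 1 2 n x.
Definition Rx n (x : C2 n.+2) : C2 n := @rsubmx _ 1 2 n x.
Definition rm n (al : 'rV['F_2]_2) (a : C2 n) : C2 n.+2 := row_mx al a.
Arguments Lx {n}.
Arguments Rx {n}.
Arguments rm {n}.

Lemma rmKl n al (a : C2 n) : Lx (rm al a) = al. Proof. exact: row_mxKl. Qed.
Lemma rmKr n al (a : C2 n) : Rx (rm al a) = a. Proof. exact: row_mxKr. Qed.
Lemma rmK n (x : C2 n.+2) : rm (Lx x) (Rx x) = x. Proof. exact: (@hsubmxK _ 1 2 n x). Qed.
Lemma rm_add n al be (a b : C2 n) : rm al a + rm be b = rm (al + be) (a + b).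
Proof. exact: (@add_row_mx _ 1 2 n al a be b). Qed.
Lemma rm0 n : rm 0 (0 : C2 n) = 0. Proof. exact: (@row_mx0 _ 1 2 n). Qed.
Lemma rm_eq0 n al (a : C2 n) : (rm al a == 0) = (al == 0) && (a == 0).
Proof. exact: (@row_mx_eq0 _ 1 2 n al a). Qed.

Lemma sum_map_rm0 n (B : seq (C2 n)) : seq_sum (map (rm 0) B) = rm 0 (seq_sum B).
Proof.
elim: B => [|b B IH] /=; first by rewrite !seq_sum_nil rm0.
by rewrite !seq_sum_cons IH rm_add add0r.
Qed.

Lemma size_flat3 (T U : Type) (f g h : U -> T) (s : seq U) :
  size (flatten [seq [:: f a; g a; h a] | a <- s]) = (3 * size s)%N.
Proof. by elim: s => [//|a s IH] /=; rewrite IH mulnS. Qed.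

Lemma w_sum : w0 + psi w0 + psi (psi w0) = 0.
Proof. by rewrite psi_add (@C2_dbl 2 (psi (psi w0))). Qed.

Lemma Good_lift n : Good n -> Good n.+2.
Proof.
move=> [P [sP bP pP [phi [bphi bg]]]].
case: bphi => phii phiK phiiK.
case: bg => gi gK giK.
pose P' := [seq map (rm 0) B | B <- P] ++
   [seq [:: rm w0 a; rm (psi w0) (phi a); rm (psi (psi w0)) (a + phi a)] | a <- enum (C2 n)].
have tx : (0 < 2 ^ n)%N by rewrite expn_gt0.
exists P'; split.
- rewrite size_cat !size_map -enumT -cardT card_C2 sP.
  have -> : (2 ^ n.+2 - 1 = 2 ^ n * 3 + (2 ^ n - 1))%N by rewrite !expnS; lia.
  by rewrite divnMDl // addnC.
- rewrite all_cat; apply/andP; split.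
    rewrite all_map; apply/allP => B HB /=.
    have /andP [sB /eqP zB] := allP bP B HB.
    by rewrite /blk size_map sB sum_map_rm0 zB rm0 eqxx.
  rewrite all_map; apply/allP => a _ /=.
  rewrite /blk /= !seq_sum_cons seq_sum_nil addr0 !rm_add addrA w_sum.
  by rewrite addrA (C2_dbl _ (a + phi a)) rm0 eqxx.
- have us := uniq_all_nonzero n.+2.
  have sub : {subset all_nonzero n.+2 <= flatten P'}.
    move=> x; rewrite mem_all_nonzero => x0.
    rewrite -(rmK _ x) in x0 *.
    move: x0; set al := Lx x; set a := Rx x => x0.
    have inT : forall b, [:: rm w0 b; rm (psi w0) (phi b); rm (psi (psi w0)) (b + phi b)] \in P'.
      move=> b; rewrite mem_cat; apply/orP; right; by apply: map_f; rewrite mem_enum.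
    case: (eqVneq al 0) => [al0 | alnz].
      have a0 : a != 0 by move: x0; rewrite rm_eq0 al0 eqxx.
      have : a \in flatten P by rewrite -(perm_mem pP) mem_all_nonzero.
      case/flattenP => B HB aB; apply/flattenP; exists (map (rm 0) B).
        by rewrite mem_cat; apply/orP; left; apply: map_f.
      by rewrite al0; apply: map_f.
    case: (nz2 _ alnz) => [-> | [-> | ->]].
    + by apply/flattenP; exists [:: rm w0 a; rm (psi w0) (phi a); rm (psi (psi w0)) (a + phi a)];
        [exact: inT | rewrite inE eqxx].
    + apply/flattenP; exists [:: rm w0 (phii a); rm (psi w0) (phi (phii a)); rm (psi (psi w0)) (phii a + phi (phii a))]; first exact: inT.
      by rewrite phiiK !inE eqxx orbT.
    + apply/flattenP; exists [:: rm w0 (gi a); rm (psi w0) (phi (gi a)); rm (psi (psi w0)) (gi a + phi (gi a))]; first exact: inT.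
      by rewrite (giK a) !inE eqxx !orbT.
  have ssz : (size (flatten P') <= size (all_nonzero n.+2))%N.
    rewrite flatten_cat size_cat size_flat3 size_all_nonzero -cardE card_C2.
    rewrite -map_flatten size_map -(perm_size pP) size_all_nonzero !expnS; lia.
  have [szeq eqm] := uniq_min_size us sub ssz.
  apply: uniq_perm => //.
  by rewrite (uniq_size_uniq us eqm) szeq.
- exists (fun x => rm (psi (Lx x)) (phi (Rx x))); split.
    exists (fun x => rm (psi (psi (Lx x))) (phii (Rx x))) => x.
      by rewrite rmKl rmKr psi3 phiK rmK.
    by rewrite rmKl rmKr phiiK psi3 rmK.
  apply: (@eq_bij _ _ (fun x => rm (psi (psi (Lx x))) (Rx x + phi (Rx x)))).
    exists (fun x => rm (psi (Lx x)) (gi (Rx x))) => x.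
      by rewrite rmKl rmKr psi3 gK rmK.
    by rewrite rmKl rmKr giK psi3 rmK.
  by move=> x /=; rewrite -[X in _ = X + _](rmK _ x) rm_add psi_add.
Qed.

Lemma Good0 : Good 0.
Proof.
exists [::]; split => //.
- have : size (all_nonzero 0) = 0%N by rewrite size_all_nonzero.
  by move/size0nil => ->.
- exists id; split; first by exists id.
  exists id => a /=; rewrite C2_dbl; symmetry; exact: thinmx0.
Qed.

Definition b1 : C2 1 := const_mx 1.

Lemma C2_1 (b : C2 1) : b = 0 \/ b = b1.
Proof.
case: (F2c (b 0 0)) => h; [left|right]; apply/rowP => j; by rewrite (ord1 j) !mxE h.
Qed.

Definition i0 : 'I_3 := @Ordinal 3 0 isT.
Definition i1 : 'I_3 := @Ordinal 3 1 isT.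
Definition i2 : 'I_3 := @Ordinal 3 2 isT.

Lemma rv3_eq (a b : C2 3) : a 0 i0 = b 0 i0 -> a 0 i1 = b 0 i1 -> a 0 i2 = b 0 i2 -> a = b.
Proof.
move=> h0 h1 h2; apply/rowP => j; case: j => [[|[|[|//]]]] i.
- by have -> : Ordinal i = i0 by apply: val_inj.
- by have -> : Ordinal i = i1 by apply: val_inj.
- by have -> : Ordinal i = i2 by apply: val_inj.
Qed.

Definition phi3 (x : C2 3) : C2 3 :=
  \row_(j < 3) (if j == i0 then x 0 i2 else if j == i1 then x 0 i0 + x 0 i2 else x 0 i1).
Definition phi3i (x : C2 3) : C2 3 :=
  \row_(j < 3) (if j == i0 then x 0 i1 + x 0 i0 else if j == i1 then x 0 i2 else x 0 i0).
Definition g3i (x : C2 3) : C2 3 :=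
  \row_(j < 3) (if j == i0 then x 0 i1 + x 0 i2 else if j == i1 then x 0 i0 + x 0 i1
                else x 0 i0 + x 0 i1 + x 0 i2).

Ltac solve3 x := apply: rv3_eq; rewrite !mxE /=; F2s (x 0 i0); F2s (x 0 i1); F2s (x 0 i2);
  by apply: val_inj.

Lemma phi3_bij : bijective phi3.
Proof. by exists phi3i => x; solve3 x. Qed.

Lemma g3_bij : bijective (fun a => a + phi3 a).
Proof. by exists g3i => x; solve3 x. Qed.

Lemma Good3 : Good 3.
Proof.
pose P3 : seq (seq (C2 3)) :=
  [:: [:: rm w0 0; rm (psi w0) 0; rm (psi (psi w0)) 0];
      [:: rm 0 b1; rm w0 b1; rm (psi w0) b1; rm (psi (psi w0)) b1]].
exists P3; split => //.
- by rewrite /= /blk /= !seq_sum_cons seq_sum_nil !addr0 !rm_add !addrA w_sum !add0r w_sum ?addr0 rm0 eqxx (C2_dbl _ b1) add0r (C2_dbl _ b1) rm0 eqxx.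
- have us := uniq_all_nonzero 3.
  have sub : {subset all_nonzero 3 <= flatten P3}.
    move=> x; rewrite mem_all_nonzero => x0.
    rewrite -(rmK _ x) in x0 *.
    move: x0; set al := Lx x; set a := Rx x => x0.
    case: (C2_1 a) => ha; rewrite ha in x0 *.
      have alnz : al != 0 by apply: contraNneq x0 => ->; rewrite rm0.
      by case: (nz2 _ alnz) => [-> | [-> | ->]]; rewrite /= !inE eqxx ?orbT.
    case: (eqVneq al 0) => [-> | alnz].
      by rewrite /= !inE eqxx ?orbT.
    by case: (nz2 _ alnz) => [-> | [-> | ->]]; rewrite /= !inE eqxx ?orbT.
  have ssz : (size (flatten P3) <= size (all_nonzero 3))%N by rewrite size_all_nonzero.
  have [szeq eqm] := uniq_min_size us sub ssz.
  apply: uniq_perm => //.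
  by rewrite (uniq_size_uniq us eqm) szeq.
- by exists phi3; split; [exact: phi3_bij | exact: g3_bij].
Qed.

Lemma GoodAll k : Good k.*2 /\ Good (k.*2 + 3).
Proof.
elim: k => [|k [IH1 IH2]]; first by split; [exact: Good0 | exact: Good3].
rewrite doubleS; split; first exact: Good_lift.
have -> : ((k.*2).+2 + 3 = (k.*2 + 3).+2)%N by rewrite !addSn.
exact: Good_lift.
Qed.

Lemma Good_ge2 r : (2 <= r)%N -> Good r.
Proof.
move=> r2; move: (odd_double_half r); case: (odd r); move: (r./2) => m /= e; subst r.
- case: m r2 => [//|m] _.
  have [_ H] := GoodAll m.
  have -> : (1 + m.+1.*2 = m.*2 + 3)%N by rewrite doubleS; lia.
  exact: H.
- by have [H _] := GoodAll m; rewrite add0n.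
Qed.

Theorem proposition7p6 (r : nat) : (2 <= r)%N ->
  zero_sum (all_nonzero r) /\
  in_lengths (all_nonzero r) ((2 ^ r - 1) %/ 3)%N /\
  (forall t, in_lengths (all_nonzero r) t -> (t <= (2 ^ r - 1) %/ 3)%N).
Proof.
move=> r2; have [P [sP bP pP _]] := Good_ge2 r r2.
have uf : uniq (flatten P) by rewrite -(perm_uniq pP) uniq_all_nonzero.
split; last split.
- rewrite /zero_sum (@seq_sum_perm (C2 r) _ _ pP) /seq_sum big_flatten /=.
  apply: big1_seq => B /andP [_ HB].
  by have /andP [_ /eqP] := allP bP B HB.
- exists P; split => // A HA.
  have /andP [sA /eqP zA] := allP bP A HA.
  apply: minimal_of_blk => //.
    exact: uniq_flatten_mem uf HA.
  move=> x xA; rewrite -mem_all_nonzero (perm_mem pP).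
  by apply/flattenP; exists A.
- move=> t [fs [<- Hm pf]].
  exact: upper Hm pf.
Qed.
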